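(* A regular Lie algebra (finite-dimensional, over an infinite field $K$) which is not semisimple (i.e. has a nonzero solvable ideal) is nilpotent.
   Context: All algebras are finite-dimensional over an infinite field $K$. For $x\in L$ write $\chi_{\operatorname{ad} x}(t)=\det(t-\operatorname{ad}x)=\sum_{i}a_i(x)t^i$. The rank $\operatorname{rk}L$ is the minimal $r$ such that $a_r(x)\neq 0$ for some $x\in L$. An element $x$ is regular if $a_{\operatorname{rk}L}(x)\neq 0$. A Lie algebra is regular if each of its nonzero elements is regular. A Lie algebra is semisimple if its solvable radical is zero. *)

(* Defs.v *)
(* A finite-dimensional Lie algebra of dimension n over K is
   modelled (up to isomorphism) as the row space 'rV[K]_n with a bracket. *)
From HB Require Import structures.
From mathcomp Require Import all_boot all_order all_algebra.
Set Implicit Arguments. Unset Strict Implicit. Unset Printing Implicit Defensive.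
Import GRing.Theory.
Local Open Scope ring_scope.

Section Lie.
Variables (K : fieldType) (n : nat).
Variable br : 'rV[K]_n -> 'rV[K]_n -> 'rV[K]_n.

Definition is_lie_bracket : Prop :=
  [/\ (forall (a : K) x y z, br (a *: x + y) z = a *: br x z + br y z),
      (forall (a : K) x y z, br x (a *: y + z) = a *: br x y + br x z),
      (forall x, br x x = 0) &
      (forall x y z, br x (br y z) + br y (br z x) + br z (br x y) = 0)].

(* matrix of ad x (acting on row vectors) *)
Definition ad_mx (x : 'rV[K]_n) : 'M[K]_n := lin1_mx (br x).

Definition chi_coef (i : nat) (x : 'rV[K]_n) : K := (char_poly (ad_mx x))`_i.

Definition is_lie_rank (r : nat) : Prop :=
  (exists x, chi_coef r x != 0) /\ (forall s, (s < r)%N -> forall y, chi_coef s y = 0).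

Definition regular_elt (x : 'rV[K]_n) : Prop :=
  exists r, is_lie_rank r /\ chi_coef r x != 0.

Definition regular_lie : Prop := forall x, x != 0 -> regular_elt x.

(* subspaces are represented by (row spaces of) square matrices *)
(* [A, B] : span of brackets of elements of A and B; since rows span the
   spaces and the bracket is bilinear, brackets of rows suffice. *)
Definition brsp (A B : 'M[K]_n) : 'M[K]_n :=
  (\sum_(i < n) \sum_(j < n) <<br (row i A) (row j B)>>)%MS.

Definition is_ideal (I : 'M[K]_n) : Prop :=
  forall x y, (y <= I)%MS -> (br x y <= I)%MS.

Definition derived (S : 'M[K]_n) : 'M[K]_n := brsp S S.

Definition solvable_sub (S : 'M[K]_n) : Prop :=
  exists k, \rank (iter k derived S) = 0%N.

(* lower central series C^0 = L, C^{k+1} = [L, C^k] *)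
Definition lie_nilpotent : Prop :=
  exists k, \rank (iter k (brsp 1%:M) 1%:M) = 0%N.

(* not semisimple: the solvable radical is nonzero, i.e. there is a nonzero
   solvable ideal *)
Definition not_semisimple : Prop :=
  exists I, [/\ is_ideal I, solvable_sub I & \rank I != 0%N].

End Lie.

Definition infinite_field (K : fieldType) : Prop := forall s : seq K, exists x, x \notin s.

(* Main.v *)
From HB Require Import structures.
From mathcomp Require Import all_boot all_order all_algebra.
Require Import Defs.
From mathcomp Require Import zify.
Set Implicit Arguments. Unset Strict Implicit. Unset Printing Implicit Defensive.
Import GRing.Theory.
Local Open Scope ring_scope.

Section Helpers.
Variable F : fieldType.

Lemma mx_ext m n (A B : 'M[F]_(m,n)) : (forall u : 'rV_m, u *m A = u *m B) -> A = B.
Proof. by move=> H; apply/row_matrixP => i; rewrite -[A]mul1mx -[B]mul1mx !row_mul H. Qed.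

Definition linf m n (f : 'rV[F]_m -> 'rV[F]_n) :=
  forall a u v, f (a *: u + v) = a *: f u + f v.

Lemma linf0 m n (f : 'rV[F]_m -> 'rV[F]_n) : linf f -> f 0 = 0.
Proof.
move=> Hf; have := Hf 1 0 0; rewrite !scale1r addr0 => /(congr1 (fun z => z - f 0)).
by rewrite subrr addrK => <-.
Qed.

Lemma linfZ m n (f : 'rV[F]_m -> 'rV[F]_n) a u : linf f -> f (a *: u) = a *: f u.
Proof. by move=> Hf; have := Hf a u 0; rewrite (linf0 Hf) !addr0. Qed.

Lemma linfD m n (f : 'rV[F]_m -> 'rV[F]_n) u v : linf f -> f (u + v) = f u + f v.
Proof. by move=> Hf; have := Hf 1 u v; rewrite !scale1r. Qed.

Lemma linf_sum m n (f : 'rV[F]_m -> 'rV[F]_n) I (r : seq I) P (G : I -> 'rV_m) :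
  linf f -> f (\sum_(i <- r | P i) G i) = \sum_(i <- r | P i) f (G i).
Proof.
move=> Hf; elim/big_rec2: _ => [|i x y _ <-]; first exact: linf0 Hf.
exact: linfD.
Qed.

Lemma mul_rV_lin1g m n (f : 'rV[F]_m -> 'rV[F]_n) u :
  linf f -> u *m lin1_mx f = f u.
Proof.
move=> Hf; rewrite [u in RHS]matrix_sum_delta big_ord1 linf_sum //; apply/rowP=> i.
rewrite mxE summxE; apply: eq_bigr => j _; rewrite linfZ // !mxE; done.
Qed.

End Helpers.
Section CommNil.
Variable V : zmodType.
Variables f g : V -> V.
Hypothesis fB : forall x y, f (x - y) = f x - f y.
Hypothesis gB : forall x y, g (x - y) = g x - g y.
Hypothesis fg : forall x, f (g x) = g (f x).

Let h x := f x - g x.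

Lemma add0 (k : V -> V) : (forall x y, k (x - y) = k x - k y) -> k 0 = 0.
Proof. by move=> kB; have := kB 0 0; rewrite !subrr => ->. Qed.

Lemma iterB (k : V -> V) j : (forall x y, k (x - y) = k x - k y) ->
  forall x y, iter j k (x - y) = iter j k x - iter j k y.
Proof. by move=> kB; elim: j => [//|j IH] x y /=; rewrite IH kB. Qed.

Lemma iter_comm1 j x : iter j f (g x) = g (iter j f x).
Proof. by elim: j => [//|j IH] /=; rewrite IH fg. Qed.
Lemma iter_comm2 j x : iter j g (f x) = f (iter j g x).
Proof. by elim: j => [//|j IH] /=; rewrite IH fg. Qed.

Lemma comm_nil a b v : iter a f v = 0 -> iter b g v = 0 -> iter (a + b) h v = 0.
Proof.
have hB : forall x y, h (x - y) = h x - h y.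
  by move=> x y; rewrite /h fB gB !opprD !opprK addrACA.
elim: a b v => [|a IHa] b v.
  by move=> Hv _; rewrite /= in Hv; rewrite Hv add0n (add0 (iterB b hB)).
elim: b v => [|b IHb] v.
  by move=> _ Hv; rewrite /= in Hv; rewrite Hv addn0 (add0 (iterB a.+1 hB)).
move=> Hf Hg.
rewrite addSn iterSr /h iterB //.
have -> : iter (a + b.+1) h (f v) = 0.
  apply: IHa; first by rewrite -iterSr.
  by rewrite iter_comm2 Hg (add0 fB).
have -> : iter (a + b.+1) h (g v) = 0.
  rewrite -addSnnS; apply: IHb; first by rewrite iter_comm1 Hf (add0 gB).
  by rewrite -iterSr.
by rewrite subrr.
Qed.
End CommNil.

Section Engel.
Variable F : fieldType.

Definition T N (X : 'M[F]_N) : 'M[F]_(N*N) := lin_mulmxr X - lin_mulmx X.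
Lemma Tv N (M X : 'M[F]_N) : mxvec M *m T X = mxvec (M *m X - X *m M).
Proof. by rewrite /T mulmxBr !mul_vec_lin /= linearB. Qed.

Definition nilmx N (A : 'M[F]_N) := exists k, iter k (fun M : 'M_N => M *m A) 1%:M = 0.
Definition ccl N p (R : 'M[F]_(p, N*N)) := forall A B : 'M[F]_N,
  (mxvec A <= R)%MS -> (mxvec B <= R)%MS -> (mxvec (A *m B - B *m A) <= R)%MS.

Definition cm N (A B : 'M[F]_N) := A *m B - B *m A.
Lemma cmDl N (A B C : 'M[F]_N) : cm (A + B) C = cm A C + cm B C.
Proof. by rewrite /cm mulmxDl mulmxDr opprD addrACA. Qed.
Lemma cmDr N (A B C : 'M[F]_N) : cm A (B + C) = cm A B + cm A C.
Proof. by rewrite /cm mulmxDl mulmxDr opprD addrACA. Qed.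
Lemma cmZl N a (A B : 'M[F]_N) : cm (a *: A) B = a *: cm A B.
Proof. by rewrite /cm -scalemxAl -scalemxAr scalerBr. Qed.
Lemma cmZr N a (A B : 'M[F]_N) : cm A (a *: B) = a *: cm A B.
Proof. by rewrite /cm -scalemxAl -scalemxAr scalerBr. Qed.
Lemma cmm N (A : 'M[F]_N) : cm A A = 0.
Proof. by rewrite /cm subrr. Qed.

Lemma memD N q (S : 'M[F]_(q, N*N)) (A B : 'M[F]_N) :
  (mxvec A <= S)%MS -> (mxvec B <= S)%MS -> (mxvec (A + B) <= S)%MS.
Proof. by move=> *; rewrite linearD addmx_sub. Qed.
Lemma memZ N q (S : 'M[F]_(q, N*N)) a (A : 'M[F]_N) :
  (mxvec A <= S)%MS -> (mxvec (a *: A) <= S)%MS.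
Proof. by move=> *; rewrite linearZ scalemx_sub. Qed.
Lemma memN N q (S : 'M[F]_(q, N*N)) (A : 'M[F]_N) :
  (mxvec A <= S)%MS -> (mxvec (- A) <= S)%MS.
Proof. by move=> *; rewrite linearN eqmx_opp. Qed.

Lemma iter_mulr m N (A : 'M[F]_N) k (M0 : 'M_(m,N)) :
  iter k (fun M => M *m A) M0 = M0 *m iter k (fun M : 'M_N => M *m A) 1%:M.
Proof. by elim: k => [|k IH] /=; [rewrite mulmx1 | rewrite IH mulmxA]. Qed.

Lemma iter_comm N (A : 'M[F]_N) k :
  A *m iter k (fun M : 'M_N => M *m A) 1%:M = iter k (fun M : 'M_N => M *m A) 1%:M *m A.
Proof. by elim: k => [|k IH] /=; [rewrite mulmx1 mul1mx | rewrite mulmxA IH]. Qed.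

Lemma iter_mull N (A : 'M[F]_N) k (M0 : 'M_N) :
  iter k (fun M => A *m M) M0 = iter k (fun M : 'M_N => M *m A) 1%:M *m M0.
Proof. by elim: k => [|k IH] /=; [rewrite mul1mx | rewrite IH mulmxA iter_comm]. Qed.

Lemma zmod6 (V : zmodType) (a b c d e g : V) :
  (a - b - (c - d)) - (e - c - (b - g)) = a - e - (g - d).
Proof.
rewrite !opprB !addrA.
rewrite (addrAC (a - b + d) (- c) b) (addrAC (a - b) d b) subrK.
rewrite (addrAC (a + d - c) (- g) c) subrK.
by rewrite (addrAC (a + d) (- g) (- e)) (addrAC a d (- e)).
Qed.

Lemma Tcm N (X Y : 'M[F]_N) : T X *m T Y - T Y *m T X = T (cm X Y).
Proof.
apply: mx_ext => u; rewrite -[u]vec_mxK mulmxBr !mulmxA !Tv -linearB /=.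
congr mxvec; rewrite /cm !(mulmxBl, mulmxBr) !mulmxA; exact: zmod6.
Qed.

Lemma Tlin N a (X Y : 'M[F]_N) : T (a *: X + Y) = a *: T X + T Y.
Proof.
apply: mx_ext => u; rewrite -[u]vec_mxK [in RHS]mulmxDr -scalemxAr !Tv -linearZ -linearD /=.
congr mxvec; rewrite mulmxDr mulmxDl -scalemxAr -scalemxAl scalerBr.
by rewrite opprD addrACA.
Qed.

Lemma T_nil N (X : 'M[F]_N) : nilmx X -> nilmx (T X).
Proof.
case=> k Hk; exists (k + k); apply: mx_ext => u.
rewrite mulmx0 -iter_mulr -[u]vec_mxK.
set M := vec_mx u.
have E : forall j, iter j (fun z => z *m T X) (mxvec M) =
   mxvec (iter j (fun Z : 'M_N => Z *m X - X *m Z) M).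
  by elim=> [//|j IH] /=; rewrite IH Tv.
rewrite E.
have -> : iter (k + k) (fun Z : 'M_N => Z *m X - X *m Z) M = 0.
  apply: (comm_nil (f := fun Z : 'M_N => Z *m X) (g := fun Z => X *m Z)).
  - by move=> x y; rewrite mulmxBl.
  - by move=> x y; rewrite mulmxBr.
  - by move=> x; rewrite mulmxA.
  - by rewrite iter_mulr Hk mulmx0.
  - by rewrite iter_mull Hk mul0mx.
by rewrite linear0.
Qed.


Lemma engel_rel r : forall N p (R : 'M[F]_(p, N*N)) u w (U : 'M[F]_(u,N)) (W : 'M[F]_(w,N)),
  (\rank R <= r)%N -> ccl R ->
  (forall A, (mxvec A <= R)%MS -> [/\ nilmx A, (U *m A <= U)%MS & (W *m A <= W)%MS]) ->
  ~~ (U <= W)%MS ->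
  exists v : 'rV_N, [/\ (v <= U)%MS, ~~ (v <= W)%MS &
     forall A, (mxvec A <= R)%MS -> (v *m A <= W)%MS].
Proof.
elim: r => [|r IH] N p R u w U W rR cR hR UW.
  have R0 : R = 0 by apply/eqP; rewrite -mxrank_eq0 -leqn0.
  have [i Hi] := row_subPn UW.
  exists (row i U); split => //; first exact: row_sub.
  by move=> A; rewrite R0 => /submx0null /eqP; rewrite mxvec_eq0 => /eqP ->; rewrite mulmx0 sub0mx.
case: (leqP (\rank R) r) => [rr|rR1]; first exact: IH rr cR hR UW.
suff main : forall d (H : 'M[F]_(N*N)), (\rank R - \rank H <= d)%N -> (H <= R)%MS ->
   (\rank H < \rank R)%N -> ccl H ->
  exists v : 'rV_N, [/\ (v <= U)%MS, ~~ (v <= W)%MS &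
     forall A, (mxvec A <= R)%MS -> (v *m A <= W)%MS].
  apply: (main (\rank R) 0); rewrite ?mxrank0 ?subn0 ?sub0mx //.
    by rewrite (leq_ltn_trans (leq0n r)).
  by move=> A B; rewrite !submx0 !mxvec_eq0 => /eqP -> /eqP ->; rewrite mulmx0 subrr.
elim=> [|d IHd] H dH HR HrR cH.
  by move: dH; rewrite leqn0 subn_eq0 leqNgt HrR.
have rH : (\rank H <= r)%N by rewrite -ltnS (leq_trans HrR).
have hH : forall A, (mxvec A <= H)%MS -> [/\ nilmx A, (U *m A <= U)%MS & (W *m A <= W)%MS].
  by move=> A AH; apply: hR; apply: submx_trans HR.
(* Step 1: find y normalizing H *)
pose Phi := lin1_mx (fun x : 'rV[F]_(N*N) => mxvec (T (vec_mx x))).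
have Hphi : forall X : 'M[F]_N, mxvec X *m Phi = mxvec (T X).
  move=> X; rewrite mul_rV_lin1g ?mxvecK // => a x z.
  by rewrite [vec_mx (_ + _)]linearD linearZ /= Tlin [mxvec (_ + _)]linearD linearZ.
pose R' := H *m Phi.
have memR' : forall A', (mxvec A' <= R')%MS -> exists2 X, (mxvec X <= H)%MS & A' = T X.
  move=> A' /submxP [D E]; exists (vec_mx (D *m H)); first by rewrite vec_mxK submxMl.
  by apply: (can_inj mxvecK); rewrite E mulmxA -Hphi vec_mxK.
have TR' : forall X, (mxvec X <= H)%MS -> (mxvec (T X) <= R')%MS.
  by move=> X XH; rewrite -Hphi submxMr.
have stab : forall q (S : 'M[F]_(q, N*N)) X, ccl S -> (mxvec X <= S)%MS -> (S *m T X <= S)%MS.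
  move=> q S X cS XS; apply/row_subP => i; rewrite row_mul -[row i S]vec_mxK Tv.
  by apply: cS => //; rewrite vec_mxK row_sub.
have [v' [v'R v'H v'N]] : exists v' : 'rV_(N*N), [/\ (v' <= R)%MS, ~~ (v' <= H)%MS &
     forall A, (mxvec A <= R')%MS -> (v' *m A <= H)%MS].
  apply: (IH _ _ R' _ _ R H).
  - by rewrite (leq_trans (mxrankM_maxl _ _)).
  - move=> A B /memR' [X XH ->] /memR' [Y YH ->].
    by rewrite Tcm TR' //; apply: cH.
  - move=> A /memR' [X XH ->]; split.
    + by apply: T_nil; case: (hH X XH).
    + by apply: stab => //; apply: submx_trans HR.
    + exact: stab.
  - by apply/negP => /mxrankS; rewrite leqNgt HrR.
pose y := vec_mx v'.
have yR : (mxvec y <= R)%MS by rewrite vec_mxK.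
have yH : ~~ (mxvec y <= H)%MS by rewrite vec_mxK.
have yN : forall X, (mxvec X <= H)%MS -> (mxvec (cm y X) <= H)%MS.
  by move=> X XH; rewrite /cm -Tv vec_mxK v'N // TR'.
pose H' := (H + mxvec y)%MS.
have memH' : forall A, (mxvec A <= H')%MS ->
    exists a, exists2 X, (mxvec X <= H)%MS & A = X + a *: y.
  move=> A /sub_addsmxP [[u1 u2] /= E]; exists (u2 0 0), (vec_mx (u1 *m H)).
    by rewrite vec_mxK submxMl.
  apply: (can_inj mxvecK); rewrite linearD linearZ /= !vec_mxK E.
  by rewrite /y vec_mxK -mul_scalar_mx -mx11_scalar.
have HH' : (H <= H')%MS by apply: addsmxSl.
have yH' : (mxvec y <= H')%MS by apply: addsmxSr.
have H'R : (H' <= R)%MS by rewrite addsmx_sub HR yR.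
have cmH : forall X Y, (mxvec X <= H)%MS -> (mxvec Y <= H)%MS -> (mxvec (cm X Y) <= H)%MS.
  exact: cH.
have cH' : ccl H'.
  rewrite /ccl; move=> A B /memH' [a [X XH ->]] /memH' [b [Y YH ->]].
  have cmN : forall Z, cm Z y = - cm y Z by move=> Z; rewrite /cm opprB.
  rewrite -/(cm _ _) cmDl !cmDr !cmZl !cmZr cmm !scaler0 addr0 cmN.
  have sH := submx_trans _ HH'.
  apply: memD; first apply: memD.
  1,2,3: apply: sH.
  - exact: cmH.
  - by apply: memZ; apply: memN; exact: yN.
  - by apply: memZ; exact: yN.
have ltH : (\rank H < \rank H')%N.
  by apply: rank_ltmx; rewrite ltmxE HH' /=; apply: contra yH; apply: submx_trans.
have [lt'|ge'] := ltnP (\rank H') (\rank R).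
  apply: (IHd H') => //; rewrite -ltnS (leq_trans _ dH) //.
  by rewrite ltn_sub2l.
have RH' : (R <= H')%MS.
  by have := mxrank_leqif_sup H'R => /leqifP; case: ifP => // _; rewrite ltnNge ge'.
have [v0 [v0U v0W v0Q]] := IH _ _ H _ _ U W rH cH hH UW.
have [yn yU yW] := hR y yR.
have iterl : forall j (v : 'rV[F]_N), (v <= U)%MS -> ~~ (v <= W)%MS ->
    (forall X, (mxvec X <= H)%MS -> (v *m X <= W)%MS) ->
    (iter j (fun z => z *m y) v <= W)%MS ->
    exists v2 : 'rV_N, [/\ (v2 <= U)%MS, ~~ (v2 <= W)%MS,
       (forall X, (mxvec X <= H)%MS -> (v2 *m X <= W)%MS) & (v2 *m y <= W)%MS].
  elim=> [|j IHj] v vU vW vQ; first by rewrite /= (negPf vW).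
  have [vyW|vyW] := boolP (v *m y <= W)%MS; first by move=> _; exists v.
  rewrite iterSr => Hj; apply: (IHj (v *m y) _ vyW _ Hj).
    exact: submx_trans (submxMr _ vU) yU.
  move=> X XH; rewrite -mulmxA.
  have -> : y *m X = X *m y + cm y X by rewrite /cm addrC subrK.
  rewrite mulmxDr mulmxA addmx_sub //; last exact: vQ (yN X XH).
  exact: submx_trans (submxMr _ (vQ X XH)) yW.
have [k Hk] := yn.
have [v2 [v2U v2W v2Q v2y]] : exists v2 : 'rV_N, [/\ (v2 <= U)%MS, ~~ (v2 <= W)%MS,
       (forall X, (mxvec X <= H)%MS -> (v2 *m X <= W)%MS) & (v2 *m y <= W)%MS].
  apply: (iterl k v0) => //; by rewrite iter_mulr Hk mulmx0 sub0mx.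
exists v2; split => // A AR.
have [a [X XH ->]] := memH' A (submx_trans AR RH').
rewrite mulmxDr; apply: addmx_sub; first exact: v2Q.
by rewrite -scalemxAr; apply: scalemx_sub.
Qed.

End Engel.

Section Poly.
Variable K : fieldType.

Lemma charX m (M : 'M[K]_m) : M *m M = 0 -> char_poly M = 'X^m.
Proof.
move=> MM.
have E : char_poly_mx M *m ('X%:M + map_mx polyC M) = ('X ^+ 2)%:M.
  rewrite /char_poly_mx mulmxDr !mulmxBl -map_mxM MM map_mx0 subr0.
  by rewrite -scalar_mxM mul_mx_scalar mul_scalar_mx subrK expr2.
have := congr1 determinant E; rewrite det_mulmx det_scalar -exprM => D.
have : char_poly M %| ('X - 0%:P) ^+ (2 * m) by rewrite subr0 -D /char_poly dvdp_mulIl.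
case/dvdp_exp_XsubCP => k _; rewrite subr0 eqp_monic ?char_poly_monic ?monicXn // => /eqP Ek.
have : size (char_poly M) = size ('X^k : {poly K}) by rewrite Ek.
by rewrite size_char_poly size_polyXn Ek => [[Hk]]; rewrite Hk.
Qed.

Lemma nil_of_char m (A : 'M[K]_m) : char_poly A = 'X^m -> nilmx A.
Proof.
case: m A => [|m] A E.
  by exists 0%N => /=; apply: flatmx0.
exists m.+1.
have itE : forall k, iter k (fun M => M *m A) 1%:M = A ^+ k.
  by elim=> [//|k IH] /=; rewrite IH exprSr.
by rewrite itE; have := Cayley_Hamilton A; rewrite E rmorphXn /= horner_mx_X.
Qed.

Lemma charXn_of_coef m (A : 'M[K]_m) :
  (forall s, (s < m)%N -> (char_poly A)`_s = 0) -> char_poly A = 'X^m.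
Proof.
move=> H; apply/polyP => i; rewrite coefXn.
case: (ltngtP i m) => [lt|gt|->].
- by rewrite H // (ltn_eqF lt).
- by rewrite nth_default ?size_char_poly // (gtn_eqF gt).
- by have := char_poly_monic A; rewrite monicE lead_coefE size_char_poly /= => /eqP ->.
Qed.
End Poly.

Section Lie.
Variables (K : fieldType) (n : nat) (br : 'rV[K]_n -> 'rV[K]_n -> 'rV[K]_n).
Hypothesis Hlie : is_lie_bracket br.

Lemma brL1 a x y z : br (a *: x + y) z = a *: br x z + br y z.
Proof. by case: Hlie. Qed.
Lemma brL2 a x y z : br x (a *: y + z) = a *: br x y + br x z.
Proof. by case: Hlie. Qed.
Lemma brxx x : br x x = 0.
Proof. by case: Hlie. Qed.
Lemma jac x y z : br x (br y z) + br y (br z x) + br z (br x y) = 0.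
Proof. by case: Hlie. Qed.

Lemma brlin2 x : linf (br x).
Proof. by move=> a u v; apply: brL2. Qed.
Lemma brlin1 z : linf (fun x => br x z).
Proof. by move=> a u v; apply: brL1. Qed.

Lemma adv x w : w *m ad_mx br x = br x w.
Proof. exact: mul_rV_lin1g (brlin2 x). Qed.

Lemma anti x y : br x y = - br y x.
Proof.
have := brxx (x + y).
rewrite (linfD _ _ (brlin1 _)) !(linfD _ _ (brlin2 _)) !brxx add0r addr0.
by move/eqP; rewrite addr_eq0 => /eqP.
Qed.

Lemma brNr x y : br x (- y) = - br x y.
Proof. by rewrite -scaleN1r (linfZ _ _ (brlin2 _)) scaleN1r. Qed.
Lemma brNl x y : br (- x) y = - br x y.
Proof. by rewrite -scaleN1r (linfZ _ _ (brlin1 _)) scaleN1r. Qed.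

Lemma adlin a x y : ad_mx br (a *: x + y) = a *: ad_mx br x + ad_mx br y.
Proof. by apply: mx_ext => u; rewrite mulmxDr -scalemxAr !adv brL1. Qed.

Lemma adcm x y : ad_mx br x *m ad_mx br y - ad_mx br y *m ad_mx br x = ad_mx br (br y x).
Proof.
apply: mx_ext => u; rewrite mulmxBr !mulmxA !adv.
have J := jac x y u.
rewrite (anti y x) brNl (anti (br x y) u) opprK.
rewrite (anti x u) brNr.
have -> : br u (br x y) = - (br x (br y u) + br y (br u x)).
  by apply/eqP; rewrite -subr_eq0 opprK addrC J.
by rewrite opprD addrC.
Qed.

Lemma brsp_gen (A B : 'M[K]_n) i j : (br (row i A) (row j B) <= brsp br A B)%MS.
Proof.
rewrite /brsp; apply: (sumsmx_sup i) => //; apply: (sumsmx_sup j) => //.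
by rewrite genmxE.
Qed.

Lemma brsp_le (A B : 'M[K]_n) m (S : 'M[K]_(m, n)) :
  (forall i j, (br (row i A) (row j B) <= S)%MS) -> (brsp br A B <= S)%MS.
Proof.
move=> H; apply/sumsmx_subP => i _; apply/sumsmx_subP => j _.
by rewrite genmxE.
Qed.

Lemma brsp_M (A B M : 'M[K]_n) m (S : 'M[K]_(m, n)) :
  (forall i j, (br (row i A) (row j B) *m M <= S)%MS) -> (brsp br A B *m M <= S)%MS.
Proof.
move=> H; rewrite /brsp sumsmxMr; apply/sumsmx_subP => i _.
rewrite sumsmxMr; apply/sumsmx_subP => j _.
by rewrite (eqmxMr _ (genmxE _)).
Qed.

Lemma brsp_core (A B : 'M[K]_n) u v : (u <= A)%MS -> (v <= B)%MS ->
  (br u v <= brsp br A B)%MS.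
Proof.
move=> uA vB.
have stepb : forall j u, (u <= A)%MS -> (br u (row j B) <= brsp br A B)%MS.
  move=> j u' u'A; rewrite anti -adv eqmx_opp.
  apply: submx_trans (submxMr _ u'A) _; apply/row_subP => i.
  by rewrite row_mul adv anti eqmx_opp brsp_gen.
rewrite -adv; apply: submx_trans (submxMr _ vB) _; apply/row_subP => j.
by rewrite row_mul adv stepb.
Qed.

Lemma ideal_derived I : is_ideal br I -> is_ideal br (derived br I).
Proof.
move=> hI x y yD; rewrite -adv; apply: submx_trans (submxMr _ yD) _.
apply: brsp_M => i j; rewrite adv.
set a := row i I; set b := row j I.
have aI : (a <= I)%MS by apply: row_sub.
have bI : (b <= I)%MS by apply: row_sub.
have J := jac x a b.
have -> : br x (br a b) = - (br a (br b x) + br b (br x a)).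
  by apply/eqP; rewrite -subr_eq0 opprK addrA J.
rewrite eqmx_opp addmx_sub // brsp_core //.
  by rewrite anti eqmx_opp hI.
by rewrite hI.
Qed.

Lemma iter_ideal I k : is_ideal br I -> is_ideal br (iter k (derived br) I).
Proof. by move=> hI; elim: k => [//|k IH] /=; apply: ideal_derived. Qed.

Lemma brsp_mono (A B : 'M[K]_n) : (A <= B)%MS -> (brsp br 1%:M A <= brsp br 1%:M B)%MS.
Proof.
move=> AB; apply: brsp_le => i j; apply: brsp_core; first exact: row_sub.
exact: submx_trans (row_sub j A) AB.
Qed.

Lemma iter_mono m (A B : 'M[K]_n) : (A <= B)%MS ->
  (iter m (brsp br 1%:M) A <= iter m (brsp br 1%:M) B)%MS.
Proof. by move=> AB; elim: m => [//|m IH] /=; apply: brsp_mono. Qed.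


Lemma main_nil : regular_lie br -> not_semisimple br -> lie_nilpotent br.
Proof.
move=> Hreg [I [hI [k Hk] rI]].
have ex : exists k, \rank (iter k (derived br) I) == 0%N by exists k; rewrite Hk.
case: (ex_minnP ex) => m; case: m => [|m] Hm Hmin.
  by move: rI; rewrite /= in Hm; rewrite (eqP Hm).
set A := iter m (derived br) I.
have rA : \rank A != 0%N.
  by apply/negP => H; have := Hmin m H; rewrite ltnn.
have DA : derived br A = 0 by apply/eqP; rewrite -mxrank_eq0.
have hA : is_ideal br A by apply: iter_ideal.
have [a aA anz] : exists2 a : 'rV_n, (a <= A)%MS & a != 0.
  by apply/rowV0Pn; rewrite -mxrank_eq0.
have ad2 : ad_mx br a *m ad_mx br a = 0.
  apply: mx_ext => u; rewrite mulmx0 mulmxA !adv.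
  have : (br a (br a u) <= derived br A)%MS.
    by apply: brsp_core => //; rewrite anti eqmx_opp hA.
  by rewrite DA submx0 => /eqP.
have cha := charX ad2.
have [r [[_ Hr] ca]] := Hreg a anz.
have rn : r = n.
  move: ca; rewrite /chi_coef cha coefXn.
  by case: (eqVneq r n) => // _; rewrite eqxx.
subst r.
have nilad : forall x, nilmx (ad_mx br x).
  move=> x; apply: nil_of_char; apply: charXn_of_coef => s sn.
  exact: Hr.
pose R := lin1_mx (fun x : 'rV[K]_n => mxvec (ad_mx br x)).
have RE : forall x, x *m R = mxvec (ad_mx br x).
  move=> x; apply: mul_rV_lin1g => c u v.
  by rewrite adlin linearD linearZ.
have memR : forall A, (mxvec A <= R)%MS -> exists x, A = ad_mx br x.
  move=> B /submxP [D E]; exists D; apply: (can_inj mxvecK).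
  by rewrite E RE.
have adR : forall x, (mxvec (ad_mx br x) <= R)%MS by move=> x; rewrite -RE submxMl.
have cR : ccl R.
  by move=> B C /memR [x ->] /memR [y ->]; rewrite adcm adR.
have claim : forall j, exists W : 'M[K]_n, [/\ (minn j n <= \rank W)%N,
    (forall x y, (y <= W)%MS -> (br x y <= W)%MS) &
    exists m, \rank (iter m (brsp br 1%:M) W) = 0%N].
  elim=> [|j [W [rW sW [q Hq]]]].
    exists 0; split; first by rewrite min0n.
      move=> x y /submx0null ->; rewrite (linf0 (brlin2 x)); exact: sub0mx.
    by exists 0%N; rewrite /= mxrank0.
  case: (ltnP (\rank W) n) => [lt|ge]; last first.
    exists W; split => //; last by exists q.
    exact: leq_trans (geq_minr _ _) ge.
  have UW : ~~ (1%:M <= W)%MS.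
    by apply/negP => /mxrankS; rewrite mxrank1 leqNgt lt.
  have hR : forall B, (mxvec B <= R)%MS ->
      [/\ nilmx B, ((1%:M : 'M[K]_n) *m B <= 1%:M)%MS & (W *m B <= W)%MS].
    move=> B /memR [x ->]; split; [exact: nilad | exact: submx1 |].
    by apply/row_subP => i; rewrite row_mul adv sW // row_sub.
  have [v [_ vW vN]] := engel_rel (leqnn (\rank R)) cR hR UW.
  have key : forall x y, (y <= W + v)%MS -> (br x y <= W)%MS.
    move=> x y yW'; rewrite -adv; apply: submx_trans (submxMr _ yW') _.
    rewrite addsmxMr addsmx_sub; apply/andP; split.
      by apply/row_subP => i; rewrite row_mul adv sW // row_sub.
    exact: vN (adR x).
  exists (W + v)%MS; split.
  - have lt2 : (\rank W < \rank (W + v))%N.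
      apply: rank_ltmx; rewrite ltmxE addsmxSl /=; apply: contra vW.
      exact: submx_trans (addsmxSr _ _).
    move: rW lt2; rewrite /minn; case: ifP; case: ifP => // *; try lia.
  - by move=> x y yW; exact: submx_trans (key x y yW) (addsmxSl W v).
  - exists q.+1; apply/eqP; rewrite -leqn0; apply: (leq_trans _ (eq_leq Hq)); rewrite iterSr.
    apply: mxrankS; apply: iter_mono; apply: brsp_le => i0 j0.
    by apply: key; apply: row_sub.
have [W [rW _ [q Hq]]] := claim n.
rewrite minnn in rW.
have W1 : (1%:M <= W)%MS.
  have := mxrank_leqif_sup (submx1 W); rewrite mxrank1 => /leqifP.
  by case: ifP => // _; rewrite ltnNge rW.
exists q; apply/eqP; rewrite -leqn0; apply: (leq_trans _ (eq_leq Hq)).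
by rewrite mxrankS // iter_mono.
Qed.
End Lie.

Unset Implicit Arguments.

Theorem lemma3 (K : fieldType) (n : nat) (br : 'rV[K]_n -> 'rV[K]_n -> 'rV[K]_n) :
  infinite_field K -> is_lie_bracket br -> regular_lie br -> not_semisimple br ->
  lie_nilpotent br.
Proof.
move=> _ Hlie Hreg Hns.
exact: (main_nil Hlie Hreg Hns).
Qed.
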